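(* Let $F,G$ be completely multiplicative functions and $s=x+iy$ with $x,y\in\mathbb{R}$ such that $D(F,s)$ and $D(G,\overline{s})$ converge absolutely. Then \[D(F,s)\,D(G,\overline{s})=D(F\times G,2x)\,D\big(F_{y}\,\square\,G_{-y},\,x\big),\] where $F_y(n)=F(n)n^{-iy}$ and $G_{-y}(n)=G(n)n^{iy}$.
   Context: A completely multiplicative function is $F:\mathbb{N}^\star\to\mathbb{C}$ with $F(1)=1$ and $F(ab)=F(a)F(b)$ for all $a,b$. $D(F,s)=\sum_{n\ge1}F(n)n^{-s}$; $n^{it}=e^{it\ln n}$. $(F\times G)(n)=F(n)G(n)$, and $(F\,\square\,G)(m)=\sum_{ab=m,\ \gcd(a,b)=1}F(a)G(b)$ (unitary convolution). *)

(* Defs.v *)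
From Stdlib Require Import Reals Lra Lia Arith List.
Open Scope R_scope.

Definition Cplx := (R * R)%type.
Definition Cmk (a b : R) : Cplx := (a, b).
Definition Cre (z : Cplx) : R := fst z.
Definition Cim (z : Cplx) : R := snd z.
Definition C0 : Cplx := (0, 0).
Definition C1 : Cplx := (1, 0).
Definition Cadd (z w : Cplx) : Cplx := (Cre z + Cre w, Cim z + Cim w).
Definition Cmul (z w : Cplx) : Cplx :=
  (Cre z * Cre w - Cim z * Cim w, Cre z * Cim w + Cim z * Cre w).
Definition Cconj (z : Cplx) : Cplx := (Cre z, - Cim z).
Definition Cnorm (z : Cplx) : R := sqrt (Cre z * Cre z + Cim z * Cim z).

(* n^{-s} = exp(-s ln n) = n^{-x} (cos(y ln n) - i sin(y ln n)) for s = x+iy, n >= 1. *)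
Definition npow_neg (n : nat) (s : Cplx) : Cplx :=
  (Rpower (INR n) (- Cre s) * cos (Cim s * ln (INR n)),
   - (Rpower (INR n) (- Cre s) * sin (Cim s * ln (INR n)))).

(* Arithmetic functions N* -> Cplx (the value at 0 is irrelevant). *)
Definition arith := nat -> Cplx.

Definition completely_multiplicative (F : arith) : Prop :=
  F 1%nat = C1 /\
  forall a b : nat, (1 <= a)%nat -> (1 <= b)%nat -> F (a * b)%nat = Cmul (F a) (F b).

Definition pmul (F G : arith) : arith := fun n => Cmul (F n) (G n).

(* Unitary convolution: (F □ G)(m) = sum_{ab=m, gcd(a,b)=1} F(a) G(b). *)
Definition uconv (F G : arith) : arith := fun m =>
  fold_right Cadd C0
    (map (fun a => Cmul (F a) (G (m / a)%nat))
       (filter (fun a => (Nat.eqb (m mod a) 0 && Nat.eqb (Nat.gcd a (m / a)) 1)%bool)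
          (seq 1 m))).

Definition twist (F : arith) (y : R) : arith :=
  fun n => Cmul (F n) (npow_neg n (0, y)).

(* n-th term (n >= 1) of the Dirichlet series, reindexed from 0. *)
Definition Dterm (F : arith) (s : Cplx) (k : nat) : Cplx := Cmul (F (S k)) (npow_neg (S k) s).

Definition D_has_sum (F : arith) (s : Cplx) (l : Cplx) : Prop :=
  Un_cv (fun N => sum_f_R0 (fun k => Cre (Dterm F s k)) N) (Cre l) /\
  Un_cv (fun N => sum_f_R0 (fun k => Cim (Dterm F s k)) N) (Cim l).

Definition D_abs_conv (F : arith) (s : Cplx) : Prop :=
  exists L : R, Un_cv (fun N => sum_f_R0 (fun k => Cnorm (Dterm F s k)) N) L.

(* Main.v *)
Require Import Defs.
From Stdlib Require Import Reals Lra Lia Arith.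
Open Scope R_scope.

Lemma INR_pos n : (1 <= n)%nat -> 0 < INR n.
Proof. intro h; apply lt_0_INR; lia. Qed.

Lemma npow1 s : npow_neg 1 s = Defs.C1.
Proof.
unfold npow_neg, Defs.C1; simpl. rewrite ln_1, Rmult_0_r, cos_0, sin_0.
unfold Rpower; rewrite ln_1, Rmult_0_r, exp_0. f_equal; ring.
Qed.

Lemma npowM a b s : (1 <= a)%nat -> (1 <= b)%nat ->
  npow_neg (a * b) s = Cmul (npow_neg a s) (npow_neg b s).
Proof.
intros ha hb. pose proof (INR_pos a ha) as pa. pose proof (INR_pos b hb) as pb.
unfold npow_neg, Cmul, Cre, Cim; simpl.
rewrite mult_INR, ln_mult by assumption.
rewrite Rmult_plus_distr_l, cos_plus, sin_plus.
rewrite <- Rpower_mult_distr by assumption.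
f_equal; ring.
Qed.

Lemma Rpower_0 z : Rpower z 0 = 1.
Proof. unfold Rpower; rewrite Rmult_0_l; apply exp_0. Qed.

Lemma npow_split n x y :
  npow_neg n (x, y) = Cmul (npow_neg n (0, y)) (npow_neg n (x, 0)).
Proof.
unfold npow_neg, Cmul, Cre, Cim; simpl.
rewrite Ropp_0, Rpower_0, Rmult_0_l, cos_0, sin_0. f_equal; ring.
Qed.

Lemma npow_2x n x y :
  npow_neg n (2 * x, 0) = Cmul (npow_neg n (x, y)) (npow_neg n (x, - y)).
Proof.
unfold npow_neg, Cmul, Cre, Cim; simpl.
rewrite Rmult_0_l, cos_0, sin_0.
replace (- (2 * x)) with (- x + - x) by ring.
rewrite Rpower_plus.
replace (- y * ln (INR n)) with (- (y * ln (INR n))) by ring.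
rewrite cos_neg, sin_neg.
pose proof (sin2_cos2 (y * ln (INR n))) as h. unfold Rsqr in h.
f_equal.
- transitivity (Rpower (INR n) (- x) * Rpower (INR n) (- x) *
    (sin (y * ln (INR n)) * sin (y * ln (INR n)) + cos (y * ln (INR n)) * cos (y * ln (INR n)))).
  + rewrite h; ring.
  + ring.
- ring.
Qed.

Lemma Cnorm_mul z w : Cnorm (Cmul z w) = Cnorm z * Cnorm w.
Proof.
destruct z as [a b], w as [c d]. unfold Cnorm, Cmul, Cre, Cim; simpl.
rewrite <- sqrt_mult by nra. f_equal; ring.
Qed.

Lemma Cnorm_ge0 z : 0 <= Cnorm z.
Proof. apply sqrt_pos. Qed.

Lemma Re_le_norm z : Rabs (fst z) <= Cnorm z.
Proof.
destruct z as [a b]; unfold Cnorm, Cre, Cim; simpl.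
rewrite <- sqrt_Rsqr_abs. apply sqrt_le_1_alt. unfold Rsqr; nra.
Qed.

Lemma Im_le_norm z : Rabs (snd z) <= Cnorm z.
Proof.
destruct z as [a b]; unfold Cnorm, Cre, Cim; simpl.
rewrite <- sqrt_Rsqr_abs. apply sqrt_le_1_alt. unfold Rsqr; nra.
Qed.

Lemma Cmul_ACA a b c d : Cmul (Cmul a b) (Cmul c d) = Cmul (Cmul a c) (Cmul b d).
Proof.
destruct a as [a1 a2], b as [b1 b2], c as [c1 c2], d as [d1 d2].
unfold Cmul, Cre, Cim; simpl; f_equal; ring.
Qed.

Lemma Cnorm_C1 : Cnorm (Cmul Defs.C1 Defs.C1) = 1.
Proof.
unfold Cnorm, Cmul, Defs.C1, Cre, Cim; simpl.
replace ((1 * 1 - 0 * 0) * (1 * 1 - 0 * 0) + (1 * 0 + 0 * 1) * (1 * 0 + 0 * 1)) with 1 by ring.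
apply sqrt_1.
Qed.


From mathcomp Require Import all_boot all_order all_algebra.
From mathcomp Require Import Rstruct.
From mathcomp.real_closed Require Import complex.
From mathcomp Require Import ring.
Set Implicit Arguments. Unset Strict Implicit. Unset Printing Implicit Defensive.
Import Order.TTheory GRing.Theory Num.Theory.
Open Scope nat_scope.

Lemma divE m a : 0 < a -> Nat.div m a = m %/ a.
Proof.
move=> ha.
have h1 := Nat.div_mod_eq m a.
have h2 : Nat.modulo m a < a by apply/ssrnat.ltP; apply: Nat.mod_upper_bound; by case: (a) ha.
by rewrite [in RHS]h1 plusE multE mulnC divnMDl // divn_small // addn0.
Qed.

Lemma modE m a : 0 < a -> Nat.modulo m a = m %% a.
Proof.
move=> ha.
have h1 := Nat.div_mod_eq m a.
have h2 : Nat.modulo m a < a by apply/ssrnat.ltP; apply: Nat.mod_upper_bound; by case: (a) ha.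
rewrite [in RHS]h1 plusE multE mulnC modnMDl modn_small //.
Qed.

Lemma dividesP a b : Nat.divide a b <-> a %| b.
Proof.
split.
  by case=> c ->; rewrite multE dvdn_mull.
by move/dvdnP=> [c ->]; exists c; rewrite multE.
Qed.

Lemma gcdE a b : Nat.gcd a b = gcdn a b.
Proof.
symmetry; apply: gcdn_def.
- by apply/dividesP; apply: Nat.gcd_divide_l.
- by apply/dividesP; apply: Nat.gcd_divide_r.
- by move=> d /dividesP h1 /dividesP h2; apply/dividesP; apply: Nat.gcd_greatest.
Qed.

Lemma eqbE x y : Nat.eqb x y = (x == y).
Proof. by case: Nat.eqb_spec => [->|h]; [rewrite eqxx | case: eqP]. Qed.

Lemma condE m a : 0 < a ->
  (Nat.eqb (Nat.modulo m a) 0 && Nat.eqb (Nat.gcd a (Nat.div m a)) 1) = (a %| m) && coprime a (m %/ a).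
Proof.
by move=> ha; rewrite !eqbE modE // divE // gcdE.
Qed.

Lemma seqE s n : List.seq s n = iota s n.
Proof. by elim: n s => // n IH s /=; rewrite IH. Qed.

Lemma filterE T (p : T -> bool) (l : list T) : List.filter p l = filter p l.
Proof. by elim: l => // x l IH /=; rewrite IH. Qed.
Lemma mapE T U (f : T -> U) (l : list T) : List.map f l = map f l.
Proof. by elim: l => // x l IH /=; rewrite IH. Qed.

Open Scope nat_scope.
Definition cond (k a : nat) : bool := (a %| k)%N && coprime a (k %/ a).

Definition cnt (N n m : nat) : nat :=
  (\sum_(1 <= d < N.+1) \sum_(1 <= k < N.+1) \sum_(1 <= a < k.+1 | cond k a)
     ((d * a == n) && (d * (k %/ a) == m)))%N.

Lemma triple_det d k a n m : 0 < d -> 0 < a -> a <= k -> cond k a ->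
  d * a = n -> d * (k %/ a) = m ->
  [/\ d = gcdn n m, a = n %/ gcdn n m & k = (n %/ gcdn n m) * (m %/ gcdn n m)].
Proof.
move=> hd ha hak /andP[hdiv hcop] hn hm.
have hg : gcdn n m = d by rewrite -hn -hm -muln_gcdr (eqP hcop) muln1.
rewrite hg -hn -hm !mulKn //; split => //.
by rewrite mulnC divnK.
Qed.

Lemma sum_pick_le m n x (F : nat -> nat) :
  \sum_(m <= i < n) (i == x) * F i <= F x.
Proof.
under eq_bigr => i _ do rewrite mulnbl.
rewrite -big_mkcond /= big_nat1_eq; by case: ifP.
Qed.

Lemma sum_ge_term m n i (P : pred nat) (F : nat -> nat) :
  m <= i < n -> P i -> F i <= \sum_(m <= j < n | P j) F j.
Proof.
move=> hi hP.
rewrite big_mkcond (bigD1_seq i) /= ?hP ?leq_addr //.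
  by rewrite mem_index_iota.
exact: iota_uniq.
Qed.

Lemma leq_sum_nat m n (P : pred nat) (E1 E2 : nat -> nat) :
  (forall i, m <= i < n -> P i -> E1 i <= E2 i) ->
  \sum_(m <= i < n | P i) E1 i <= \sum_(m <= i < n | P i) E2 i.
Proof.
move=> h; rewrite big_nat_cond [X in _ <= X]big_nat_cond.
by apply: leq_sum => i /andP[]; exact: h.
Qed.

Lemma cnt_le1 N n m : cnt N n m <= 1.
Proof.
set g0 := gcdn n m; set a0 := n %/ g0; set k0 := a0 * (m %/ g0).
apply: (@leq_trans (\sum_(1 <= d < N.+1) (d == g0) * \sum_(1 <= k < N.+1) (k == k0) *
          \sum_(1 <= a < k.+1) (a == a0) * 1)).
  apply: leq_sum_nat => d /andP[hd _] _.
  rewrite big_distrr /=; apply: leq_sum_nat => k /andP[hk _] _.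
  rewrite big_mkcond /= !big_distrr /=; apply: leq_sum_nat => a /andP[ha hak] _.
  case hc: (cond k a) => //.
  case: eqP => // hn; case: eqP => // hm.
  have [-> -> ->] := triple_det hd ha hak hc hn hm.
  by rewrite !eqxx.
apply: leq_trans (sum_pick_le _ _ _ (fun _ => 1)).
apply: leq_sum_nat => d _ _; apply: leq_mul => //.
apply: leq_trans (sum_pick_le _ _ _ (fun _ => 1)).
apply: leq_sum_nat => k _ _; apply: leq_mul => //.
exact: (sum_pick_le _ _ _ (fun _ => 1)).
Qed.

Lemma cnt_sq N K n m : 0 < n <= K -> 0 < m <= K -> K * K <= N -> cnt N n m = 1.
Proof.
move=> /andP[hn hnK] /andP[hm hmK] hKN.
apply/eqP; rewrite eqn_leq cnt_le1 /=.
set g0 := gcdn n m; set a0 := n %/ g0; set b0 := m %/ g0; set k0 := a0 * b0.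
have hg0 : 0 < g0 by rewrite gcdn_gt0 hn.
have hna : g0 * a0 = n by rewrite mulnC divnK // dvdn_gcdl.
have hmb : g0 * b0 = m by rewrite mulnC divnK // dvdn_gcdr.
have ha0 : 0 < a0 by rewrite divn_gt0 // dvdn_leq // dvdn_gcdl.
have hb0 : 0 < b0 by rewrite divn_gt0 // dvdn_leq // dvdn_gcdr.
have hkb : k0 %/ a0 = b0 by rewrite mulKn.
have hcop : coprime a0 b0.
  have h : g0 * gcdn a0 b0 = g0 * 1 by rewrite muln_gcdr hna hmb muln1.
  by rewrite /coprime; apply/eqP; move/eqP: h; rewrite eqn_pmul2l // => /eqP.
have hKK : n * m <= N by apply: leq_trans hKN; exact: leq_mul.
have hk0N : k0 <= n * m.
  by apply: leq_mul; [rewrite -hna leq_pmull | rewrite -hmb leq_pmull].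
apply: leq_trans (sum_ge_term (i := g0) _ _ _) => //.
- apply: leq_trans (sum_ge_term (i := k0) _ _ _) => //.
  + apply: leq_trans (sum_ge_term (i := a0) _ _ _) => //.
    * by rewrite hkb hna hmb !eqxx.
    * by rewrite ha0 ltnS leq_pmulr.
    * by rewrite /cond hkb hcop dvdn_mulr.
  + by rewrite muln_gt0 ha0 hb0 ltnS (leq_trans hk0N).
- rewrite hg0 ltnS; apply: leq_trans hKN; apply: leq_trans (leq_mul hnK hmK).
  by apply: leq_trans (dvdn_leq hn (dvdn_gcdl n m)) _; rewrite leq_pmulr.
Qed.

Section CombRing.
Local Open Scope ring_scope.
Lemma pick1 (V : pzSemiRingType) (L u : nat) (F : nat -> V) :
  (1 <= u < L)%N -> \sum_(1 <= n < L) (u == n)%:R * F n = F u.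
Proof.
move=> hu.
under eq_bigr => n _ do rewrite mulr_natl mulrb.
by rewrite -big_mkcond /= (eq_bigl (fun n => n == u)) ?big_nat1_eq ?hu // => n; rewrite eq_sym.
Qed.

Lemma pick2 (V : pzSemiRingType) (L u v : nat) (F : nat -> nat -> V) :
  (1 <= u < L)%N -> (1 <= v < L)%N ->
  \sum_(1 <= n < L) \sum_(1 <= m < L) ((u == n) && (v == m))%:R * F n m = F u v.
Proof.
move=> hu hv.
under eq_bigr => n _ do under eq_bigr => m _ do rewrite -mulnb natrM -mulrA.
under eq_bigr => n _ do rewrite -big_distrr /=.
by rewrite pick1 // pick1.
Qed.

Lemma comb_main (V : comPzRingType) (f g : nat -> V) (N : nat) :
  (forall d a, (0 < d)%N -> (0 < a)%N -> f (d * a)%N = f d * f a) ->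
  (forall d a, (0 < d)%N -> (0 < a)%N -> g (d * a)%N = g d * g a) ->
  (\sum_(1 <= d < N.+1) f d * g d) *
  (\sum_(1 <= k < N.+1) \sum_(1 <= a < k.+1 | cond k a) f a * g (k %/ a)%N)
  = \sum_(1 <= n < (N * N).+1) \sum_(1 <= m < (N * N).+1) (cnt N n m)%:R * (f n * g m).
Proof.
move=> fM gM.
rewrite /cnt; symmetry.
under eq_bigr => n _ do under eq_bigr => m _ do
  rewrite natr_sum mulr_suml.
under eq_bigr => n _ do rewrite exchange_big_nat /=.
rewrite exchange_big_nat /=.
under eq_bigr => d _ do under eq_bigr => n _ do under eq_bigr => m _ do
  rewrite natr_sum mulr_suml.
under eq_bigr => d _ do under eq_bigr => n _ do rewrite exchange_big_nat /=.
under eq_bigr => d _ do rewrite exchange_big_nat /=.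
under eq_bigr => d _ do under eq_bigr => k _ do under eq_bigr => n _ do under eq_bigr => m _ do
  rewrite natr_sum mulr_suml.
under eq_bigr => d _ do under eq_bigr => k _ do under eq_bigr => n _ do rewrite exchange_big_nat /=.
under eq_bigr => d _ do under eq_bigr => k _ do rewrite exchange_big_nat /=.
rewrite big_distrl /=.
apply: eq_big_nat => d /andP[hd1 hdN].
rewrite big_distrr /=.
apply: eq_big_nat => k /andP[hk1 hkN].
rewrite big_distrr /=.
rewrite big_nat_cond [in RHS]big_nat_cond.
apply: eq_bigr => a /andP[/andP[ha1 hak] hc].
have hadk : (a %| k)%N by case/andP: hc.
have hb : (0 < k %/ a)%N by rewrite divn_gt0.
rewrite pick2; last first.
- apply/andP; split; first by rewrite muln_gt0 hd1.
  rewrite ltnS; apply: leq_mul; first by rewrite -ltnS.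
  by apply: leq_trans (leq_div k a) _; rewrite -ltnS.
- apply/andP; split; first by rewrite muln_gt0 hd1.
  rewrite ltnS; apply: leq_mul; first by rewrite -ltnS.
  rewrite ltnS in hak; apply: leq_trans hak _; by rewrite -ltnS.
rewrite fM // gM //.
by rewrite mulrACA.
Qed.

End CombRing.

Section Cplx.
Local Open Scope ring_scope.
Lemma Re_add (z w : R[i]) : complex.Re (z + w) = complex.Re z + complex.Re w.
Proof. by case: z; case: w. Qed.
Lemma Im_add (z w : R[i]) : complex.Im (z + w) = complex.Im z + complex.Im w.
Proof. by case: z; case: w. Qed.
Lemma Re_MnR (w : R[i]) n : complex.Re (w *+ n) = complex.Re w *+ n.
Proof. by elim: n => [|n IH]; rewrite ?mulr0n // !mulrS Re_add IH. Qed.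
Lemma Im_MnR (w : R[i]) n : complex.Im (w *+ n) = complex.Im w *+ n.
Proof. by elim: n => [|n IH]; rewrite ?mulr0n // !mulrS Im_add IH. Qed.
Lemma Re_sum I (r : seq I) (P : pred I) (F : I -> R[i]) :
  complex.Re (\sum_(i <- r | P i) F i) = \sum_(i <- r | P i) complex.Re (F i).
Proof. by apply: (big_morph _ Re_add). Qed.
Lemma Im_sum I (r : seq I) (P : pred I) (F : I -> R[i]) :
  complex.Im (\sum_(i <- r | P i) F i) = \sum_(i <- r | P i) complex.Im (F i).
Proof. by apply: (big_morph _ Im_add). Qed.
Lemma Re_mul (z w : R[i]) : complex.Re (z * w) = complex.Re z * complex.Re w - complex.Im z * complex.Im w.
Proof. by case: z; case: w. Qed.
Lemma Im_mul (z w : R[i]) : complex.Im (z * w) = complex.Re z * complex.Im w + complex.Im z * complex.Re w.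
Proof. by case: z; case: w. Qed.

End Cplx.

Section Err.
Local Open Scope ring_scope.

Lemma sq_sum1 (V : comPzRingType) (f : nat -> V) K L : (K < L)%N ->
  \sum_(1 <= n < L) ((n <= K)%N)%:R * f n = \sum_(1 <= n < K.+1) f n.
Proof.
move=> hKL.
under eq_bigr => n _ do rewrite mulr_natl mulrb.
rewrite -big_mkcond /= (big_nat_widen 1 K.+1 L xpredT) //.
Qed.

Lemma sq_sum (V : comPzRingType) (f g : nat -> V) K L : (K < L)%N ->
  (\sum_(1 <= n < K.+1) f n) * (\sum_(1 <= m < K.+1) g m) =
  \sum_(1 <= n < L) \sum_(1 <= m < L) ((n <= K)%N && (m <= K)%N)%:R * (f n * g m).
Proof.
move=> hKL.
under [RHS]eq_bigr => n _ do under eq_bigr => m _ do rewrite -mulnb natrM mulrACA.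
under [RHS]eq_bigr => n _ do rewrite -big_distrr /=.
by rewrite -big_distrl /= sq_sum1 // sq_sum1.
Qed.

Section ErrBound.
Variables (pi : R[i] -> R).
Hypothesis piD : forall z w, pi (z + w) = pi z + pi w.
Hypothesis piN : forall (n : nat) w, pi (n%:R * w) = n%:R * pi w.
Variables (f g : nat -> R[i]) (af bg : nat -> R).
Hypothesis fM : forall d a, (0 < d)%N -> (0 < a)%N -> f (d * a)%N = f d * f a.
Hypothesis gM : forall d a, (0 < d)%N -> (0 < a)%N -> g (d * a)%N = g d * g a.
Hypothesis hb : forall n m, `|pi (f n * g m)| <= af n * bg m.

Lemma pi0 : pi 0 = 0.
Proof. by apply: (@addrI _ (pi 0)); rewrite addr0 -piD addr0. Qed.
Lemma piB z w : pi (z - w) = pi z - pi w.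
Proof.
by apply: (@addIr _ (pi w)); rewrite -piD !subrK.
Qed.
Lemma pi_sum I (r : seq I) (P : pred I) (F : I -> R[i]) :
  pi (\sum_(i <- r | P i) F i) = \sum_(i <- r | P i) pi (F i).
Proof. by apply: (big_morph _ piD pi0). Qed.

Lemma err_bound N K : (K * K <= N)%N ->
  `|pi ((\sum_(1 <= d < N.+1) f d * g d) *
       (\sum_(1 <= k < N.+1) \sum_(1 <= a < k.+1 | cond k a) f a * g (k %/ a)%N)
     - (\sum_(1 <= n < K.+1) f n) * (\sum_(1 <= m < K.+1) g m))|
  <= (\sum_(1 <= n < (N * N).+1) af n) * (\sum_(1 <= m < (N * N).+1) bg m)
     - (\sum_(1 <= n < K.+1) af n) * (\sum_(1 <= m < K.+1) bg m).
Proof.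
move=> hKN.
have hKL : (K < (N * N).+1)%N.
  rewrite ltnS.
  have h1 : (K <= K * K)%N by case: (K) => // K'; rewrite leq_pmulr.
  have h2 : (N <= N * N)%N by case: (N) => // N'; rewrite leq_pmulr.
  exact: leq_trans h1 (leq_trans hKN h2).
rewrite comb_main // (sq_sum f g hKL) (sq_sum af bg hKL).
set c := cnt N; set sq := fun n m => ((n <= K)%N && (m <= K)%N).
have -> : (\sum_(1 <= n < (N * N).+1) af n) * (\sum_(1 <= m < (N * N).+1) bg m)
   - \sum_(1 <= n < (N * N).+1) \sum_(1 <= m < (N * N).+1) (sq n m)%:R * (af n * bg m)
   = \sum_(1 <= n < (N * N).+1) \sum_(1 <= m < (N * N).+1) (1 - (sq n m)%:R) * (af n * bg m).
  rewrite big_distrl -sumrB; apply: eq_bigr => n _; rewrite big_distrr -sumrB.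
  by apply: eq_bigr => m _; rewrite mulrBl mul1r.
rewrite -sumrB.
under eq_bigr => n _ do rewrite -sumrB.
rewrite pi_sum; apply: le_trans (ler_norm_sum _ _ _) _.
apply: ler_sum_nat => n /andP[hn _].
rewrite pi_sum; apply: le_trans (ler_norm_sum _ _ _) _.
apply: ler_sum_nat => m /andP[hm _].
rewrite piB !piN -mulrBl normrM.
apply: ler_pM => //; rewrite /sq.
case hs: ((n <= K)%N && (m <= K)%N).
  move/andP: hs => [hnK hmK].
  by rewrite /c (cnt_sq (K := K)) ?hn ?hm // (_ : (nat_of_bool true)%:R = 1 :> R) // subrr normr0.
by rewrite (_ : (nat_of_bool false)%:R = 0 :> R) // !subr0 normr_nat lern1 cnt_le1.
Qed.
End ErrBound.
End Err.

Section Analysis.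
Local Open Scope R_scope.

Lemma Un_cv_ext (u v : nat -> R) l : (forall n, u n = v n) -> Un_cv u l -> Un_cv v l.
Proof. move=> e h eps he; case: (h eps he) => N hN; exists N => n hn; rewrite -e; exact: hN. Qed.

Lemma cv_shift_back (u : nat -> R) l : Un_cv (fun n => u (S n)) l -> Un_cv u l.
Proof.
move=> h eps he; case: (h eps he) => N hN; exists (S N) => n hn.
case: n hn => [|n] hn.
  exfalso; exact: (Nat.nle_succ_0 N hn).
apply: (hN n); apply: le_S_n; exact: hn.
Qed.

Lemma abs_cv (v M : nat -> R) C : (forall k, Rabs (v k) <= M k) ->
  (forall N, sum_f_R0 M N <= C) -> exists l, Un_cv (sum_f_R0 v) l.
Proof.
move=> hv hM.
have g : Un_growing (sum_f_R0 (fun k => Rabs (v k))).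
  by move=> n /=; have := Rabs_pos (v (S n)); lra.
have ub : has_ub (sum_f_R0 (fun k => Rabs (v k))).
  exists C => r [i ->]; apply: Rle_trans (hM i).
  by apply: sum_Rle => n _; apply: hv.
case: (growing_cv _ g ub) => l hl.
have hc := cauchy_abs v (cv_cauchy_1 _ (exist _ l hl)).
by case: (cv_cauchy_2 _ hc) => l' h; exists l'.
Qed.

Lemma sum_le_lim (M : nat -> R) A : (forall k, 0 <= M k) ->
  Un_cv (sum_f_R0 M) A -> forall N, sum_f_R0 M N <= A.
Proof.
move=> h0 h; apply: growing_ineq => //.
by move=> n /=; have := h0 (S n); lra.
Qed.

Lemma compare_lim (p q e : nat -> R) X Y : Un_cv p X -> Un_cv q Y -> Un_cv e 0 ->
  (forall K N, (K * K <= N)%nat -> Rabs (q N - p K) <= e K) -> X = Y.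
Proof.
move=> hp hq he hb.
case: (Req_dec X Y) => // hXY; exfalso.
have hpos : 0 < Rabs (X - Y) / 3.
  have : 0 < Rabs (X - Y) by apply: Rabs_pos_lt; lra.
  lra.
case: (hp _ hpos) => K1 h1; case: (he _ hpos) => K2 h2; case: (hq _ hpos) => N0 h3.
set K := maxn K1 K2; set N := maxn N0 (K * K).
have e1 := h1 K ltac:(apply/ssrnat.leP; exact: leq_maxl).
have e2 := h2 K ltac:(apply/ssrnat.leP; exact: leq_maxr).
have e3 := h3 N ltac:(apply/ssrnat.leP; exact: leq_maxl).
have e4 := hb K N (leq_maxr _ _).
rewrite /Rdist in e1 e2 e3.
move: e1 e2 e3 e4; set a := p K; set b := q N; set c := e K.
rewrite Rminus_0_r.
split_Rabs; lra.
Qed.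
End Analysis.

Definition toC (z : Cplx) : R[i] := Complex (fst z) (snd z).
Lemma toC_add z w : toC (Cadd z w) = (toC z + toC w)%R.
Proof. reflexivity. Qed.
Lemma toC_mul z w : toC (Cmul z w) = (toC z * toC w)%R.
Proof. reflexivity. Qed.
Lemma toC0 : toC Defs.C0 = 0%R.
Proof. reflexivity. Qed.
Lemma toC1 : toC Defs.C1 = 1%R.
Proof. reflexivity. Qed.

Lemma toC_fold T (phi : T -> Cplx) (l : list T) :
  toC (List.fold_right Cadd Defs.C0 (List.map phi l)) = (\sum_(a <- l) toC (phi a))%R.
Proof.
elim: l => [|a l IH] /=; first by rewrite big_nil.
by rewrite toC_add IH big_cons.
Qed.

Lemma sumR_shift (phi : nat -> R) N :
  sum_f_R0 (fun k => phi k.+1) N = (\sum_(1 <= n < N.+2) phi n)%R.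
Proof.
rewrite big_add1 /=.
elim: N => [|N IH] /=; first by rewrite big_nat1.
by rewrite IH [in RHS]big_nat_recr.
Qed.

Section Main.
Variables (F G : arith) (x y : R).
Hypothesis HF : completely_multiplicative F.
Hypothesis HG : completely_multiplicative G.

Definition fC n := toC (Cmul (F n) (npow_neg n (x, y))).
Definition gC n := toC (Cmul (G n) (npow_neg n (x, Ropp y))).
Definition aF n := Cnorm (Cmul (F n) (npow_neg n (x, y))).
Definition bG n := Cnorm (Cmul (G n) (npow_neg n (x, Ropp y))).

Lemma le1P n : (0 < n)%N -> (1 <= n)%coq_nat.
Proof. by move/ssrnat.leP. Qed.

Lemma fC_mul d a : (0 < d)%N -> (0 < a)%N -> fC (d * a) = (fC d * fC a)%R.
Proof.
move=> hd ha; rewrite /fC (HF.2 _ _ (le1P hd) (le1P ha)) (npowM d a _ (le1P hd) (le1P ha)) Cmul_ACA //.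
Qed.
Lemma gC_mul d a : (0 < d)%N -> (0 < a)%N -> gC (d * a) = (gC d * gC a)%R.
Proof.
move=> hd ha; rewrite /gC (HG.2 _ _ (le1P hd) (le1P ha)) (npowM d a _ (le1P hd) (le1P ha)) Cmul_ACA //.
Qed.
Lemma aF_mul d a : (0 < d)%N -> (0 < a)%N -> aF (d * a) = (aF d * aF a)%R.
Proof.
move=> hd ha; rewrite /aF (HF.2 _ _ (le1P hd) (le1P ha)) (npowM d a _ (le1P hd) (le1P ha)) Cmul_ACA Cnorm_mul //.
Qed.
Lemma bG_mul d a : (0 < d)%N -> (0 < a)%N -> bG (d * a) = (bG d * bG a)%R.
Proof.
move=> hd ha; rewrite /bG (HG.2 _ _ (le1P hd) (le1P ha)) (npowM d a _ (le1P hd) (le1P ha)) Cmul_ACA Cnorm_mul //.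
Qed.
Lemma aF1 : aF 1 = 1%R.
Proof. by rewrite /aF HF.1 npow1 Cnorm_C1. Qed.
Lemma bG1 : bG 1 = 1%R.
Proof. by rewrite /bG HG.1 npow1 Cnorm_C1. Qed.
Lemma aF_ge0 n : (0 <= aF n)%R.
Proof. by apply/RleP; apply: Cnorm_ge0. Qed.
Lemma bG_ge0 n : (0 <= bG n)%R.
Proof. by apply/RleP; apply: Cnorm_ge0. Qed.

Lemma hbRe n m : (`|complex.Re (fC n * gC m)| <= aF n * bG m)%R.
Proof.
rewrite /fC /gC -toC_mul /aF /bG -RmultE -Cnorm_mul; apply/RleP; exact: Re_le_norm.
Qed.
Lemma hbIm n m : (`|complex.Im (fC n * gC m)| <= aF n * bG m)%R.
Proof.
rewrite /fC /gC -toC_mul /aF /bG -RmultE -Cnorm_mul; apply/RleP; exact: Im_le_norm.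
Qed.

Local Open Scope R_scope.
Lemma DH k : toC (Dterm (pmul F G) (2 * x, 0) k) = (fC k.+1 * gC k.+1)%R.
Proof.
rewrite /Dterm /pmul (npow_2x _ _ y) !toC_mul /fC /gC !toC_mul.
by rewrite mulrACA.
Qed.

Lemma DU k : toC (Dterm (uconv (twist F y) (twist G (- y))) (x, 0) k) =
  (\sum_(1 <= a < k.+2 | cond k.+1 a) fC a * gC (k.+1 %/ a))%R.
Proof.
rewrite /Dterm /uconv toC_mul toC_fold filterE seqE big_filter.
change (iota 1 k.+1) with (index_iota 1 k.+2).
rewrite big_distrl /= big_nat_cond [in RHS]big_nat_cond.
apply: eq_big => a.
  case/boolP: (1 <= a < k.+2)%N => //= /andP[ha _].
  by rewrite condE.
move=> /and3P[/andP[ha _] h1 h2].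
have hc : cond k.+1 a by rewrite /cond -condE // h1 h2.
set m := k.+1.
rewrite divE //.
set b := (m %/ a)%N.
have hdiv : (a %| m)%N by case/andP: hc.
have hb : (0 < b)%N by rewrite divn_gt0 // dvdn_leq.
have hm : m = (a * b)%N by rewrite /b mulnC divnK.
have e : npow_neg m (x, 0) = Cmul (npow_neg a (x, 0)) (npow_neg b (x, 0)).
  by rewrite [in LHS]hm; apply: npowM; apply: le1P.
rewrite e /twist /fC /gC (npow_split a x y) (npow_split b x (- y)) !toC_mul.
ring.
Qed.
End Main.

Section Final.
Local Open Scope ring_scope.

Definition ccv (u : nat -> R[i]) (l : R[i]) :=
  Un_cv (fun n => complex.Re (u n)) (complex.Re l) /\
  Un_cv (fun n => complex.Im (u n)) (complex.Im l).

Lemma ccv_mul u v l m : ccv u l -> ccv v m -> ccv (fun n => u n * v n) (l * m).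
Proof.
case=> ur ui [vr vi]; split.
  apply: (Un_cv_ext (u := fun n => complex.Re (u n) * complex.Re (v n)
                                 - complex.Im (u n) * complex.Im (v n))).
    by move=> n; rewrite Re_mul.
  rewrite Re_mul; apply: CV_minus; exact: CV_mult.
apply: (Un_cv_ext (u := fun n => complex.Re (u n) * complex.Im (v n)
                               + complex.Im (u n) * complex.Re (v n))).
  by move=> n; rewrite Im_mul.
rewrite Im_mul; apply: CV_plus; exact: CV_mult.
Qed.

Lemma Re_opp (z : R[i]) : complex.Re (- z) = - complex.Re z.
Proof. by case: z. Qed.
Lemma Im_opp (z : R[i]) : complex.Im (- z) = - complex.Im z.
Proof. by case: z. Qed.

Lemma final_eq (P Q : nat -> R[i]) X Y (e : nat -> R) :
  ccv P X -> ccv Q Y -> Un_cv e 0 ->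
  (forall K N, (K * K <= N)%N ->
     `|complex.Re (Q N - P K)| <= e K /\ `|complex.Im (Q N - P K)| <= e K) -> X = Y.
Proof.
case=> pr pi [qr qi] he hb.
have eR : complex.Re X = complex.Re Y.
  apply: (compare_lim pr qr he) => K N hKN.
  have [h _] := hb K N hKN; move: h; rewrite Re_add Re_opp => /RleP; exact.
have eI : complex.Im X = complex.Im Y.
  apply: (compare_lim pi qi he) => K N hKN.
  have [_ h] := hb K N hKN; move: h; rewrite Im_add Im_opp => /RleP; exact.
by move: eR eI; case: (X) => a b; case: (Y) => c d /= -> ->.
Qed.

Lemma term_le_sum (h : nat -> R) n N : (forall i, 0 <= h i) -> (1 <= n <= N)%N ->
  h n <= \sum_(1 <= i < N.+1) h i.
Proof.
move=> h0 hn.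
have hmem : n \in index_iota 1 N.+1 by rewrite mem_index_iota ltnS.
rewrite (bigD1_seq n hmem) /=; last exact: iota_uniq.
by rewrite lerDl sumr_ge0.
Qed.

Lemma sum_ge0_nat (h : nat -> R) m n : (forall i, 0 <= h i) -> 0 <= \sum_(m <= i < n) h i.
Proof. by move=> h0; apply: sumr_ge0. Qed.

Lemma sum_mono (h : nat -> R) N : (forall i, 0 <= h i) ->
  \sum_(1 <= i < N.+1) h i <= \sum_(1 <= i < N.+2) h i.
Proof. by move=> h0; rewrite [X in _ <= X]big_nat_recr //= lerDl. Qed.

End Final.

Lemma Re_natM n (w : R[i]) : complex.Re (n%:R * w)%R = (n%:R * complex.Re w)%R.
Proof. by rewrite !mulr_natl Re_MnR. Qed.
Lemma Im_natM n (w : R[i]) : complex.Im (n%:R * w)%R = (n%:R * complex.Im w)%R.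
Proof. by rewrite !mulr_natl Im_MnR. Qed.

Lemma normRE (z : R) : Rabs z = `|z|%R.
Proof. by []. Qed.

Open Scope R_scope.

Theorem mainTheorem13 (F G : arith) (x y : R) :
  completely_multiplicative F ->
  completely_multiplicative G ->
  D_abs_conv F (x, y) ->
  D_abs_conv G (Cconj (x, y)) ->
  exists a b : Cplx,
    D_has_sum (pmul F G) (2 * x, 0) a /\
    D_has_sum (uconv (twist F y) (twist G (- y))) (x, 0) b /\
    forall l1 l2 : Cplx,
      D_has_sum F (x, y) l1 -> D_has_sum G (Cconj (x, y)) l2 ->
      Cmul l1 l2 = Cmul a b.
Proof.
move=> HF HG [A hA] [B hB].
pose af := aF F x y; pose bg := bG G x y.
pose PA N := (\sum_(1 <= n < N.+1) af n)%R.
pose PB N := (\sum_(1 <= n < N.+1) bg n)%R.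
have af0 : forall n, (0 <= af n)%R by move=> n; apply: aF_ge0.
have bg0 : forall n, (0 <= bg n)%R by move=> n; apply: bG_ge0.
have hA1 : forall N, sum_f_R0 (fun k => Cnorm (Dterm F (x, y) k)) N = PA N.+1.
  by move=> N; rewrite (sumR_shift af).
have hB1 : forall N, sum_f_R0 (fun k => Cnorm (Dterm G (Cconj (x, y)) k)) N = PB N.+1.
  by move=> N; rewrite (sumR_shift bg).
have hPAcv : Un_cv PA A by apply: cv_shift_back; exact: (Un_cv_ext hA1 hA).
have hPBcv : Un_cv PB B by apply: cv_shift_back; exact: (Un_cv_ext hB1 hB).
have hPAle : forall N, (PA N <= A)%R.
  move=> N; apply: le_trans (sum_mono _ af0) _.
  have h := sum_le_lim (M := fun k => Cnorm (Dterm F (x, y) k)) (fun k => Cnorm_ge0 _) hA N.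
  rewrite hA1 in h; apply/RleP; exact: h.
have hPBle : forall N, (PB N <= B)%R.
  move=> N; apply: le_trans (sum_mono _ bg0) _.
  have h := sum_le_lim (M := fun k => Cnorm (Dterm G (Cconj (x, y)) k)) (fun k => Cnorm_ge0 _) hB N.
  rewrite hB1 in h; apply/RleP; exact: h.
have A0 : (0 <= A)%R by apply: le_trans (hPAle 0%N); apply: sumr_ge0.
have B0 : (0 <= B)%R by apply: le_trans (hPBle 0%N); apply: sumr_ge0.
have bgB : forall n, (bg n.+1 <= B)%R.
  by move=> n; apply: le_trans (hPBle n.+1); apply: term_le_sum => //; rewrite leqnn.
have [ar har] : exists l, Un_cv (sum_f_R0 (fun k => Cre (Dterm (pmul F G) (2 * x, 0) k))) l.
  apply: (abs_cv (M := fun k => (af k.+1 * B)%R) (C := (A * B)%R)).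
    move=> k.
    have -> : Cre (Dterm (pmul F G) (2 * x, 0) k) = complex.Re (toC (Dterm (pmul F G) (2 * x, 0) k)) by [].
    rewrite (DH _ _ _ y); apply/RleP; apply: le_trans (hbRe _ _ _ _ _ _) _.
    by apply: ler_wpM2l => //; apply: bgB.
  move=> N; rewrite (sumR_shift (fun n => af n * B)%R) -big_distrl /=; apply/RleP.
  by apply: ler_wpM2r => //; apply: hPAle.
have [ai hai] : exists l, Un_cv (sum_f_R0 (fun k => Cim (Dterm (pmul F G) (2 * x, 0) k))) l.
  apply: (abs_cv (M := fun k => (af k.+1 * B)%R) (C := (A * B)%R)).
    move=> k.
    have -> : Cim (Dterm (pmul F G) (2 * x, 0) k) = complex.Im (toC (Dterm (pmul F G) (2 * x, 0) k)) by [].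
    rewrite (DH _ _ _ y); apply/RleP; apply: le_trans (hbIm _ _ _ _ _ _) _.
    by apply: ler_wpM2l => //; apply: bgB.
  move=> N; rewrite (sumR_shift (fun n => af n * B)%R) -big_distrl /=; apply/RleP.
  by apply: ler_wpM2r => //; apply: hPAle.
pose Mu m := (\sum_(1 <= a < m.+1 | cond m a) af a * bg (m %/ a)%N)%R.
have hSU : forall N, (\sum_(1 <= m < N.+1) Mu m <= A * B)%R.
  move=> N; case: N => [|N]; first by rewrite big_geq // mulr_ge0.
  set S := (\sum_(1 <= m < N.+2) Mu m)%R.
  have hS0 : (0 <= S)%R.
    by apply: sumr_ge0 => m _; apply: sumr_ge0 => a _; apply: mulr_ge0.
  have hD : (1 <= \sum_(1 <= d < N.+2) af d * bg d)%R.
    rewrite big_ltn // /af /bg (aF1 _ _ HF) (bG1 _ _ HG) mulr1 lerDl.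
    by apply: sumr_ge0 => d _; apply: mulr_ge0.
  apply: le_trans (_ : S <= (\sum_(1 <= d < N.+2) af d * bg d) * S)%R _.
    exact: ler_peMl.
  rewrite /S (comb_main (f := af) (g := bg) N.+1 (aF_mul _ _ HF) (bG_mul _ _ HG)).
  apply: le_trans (_ : _ <= (\sum_(1 <= n < (N.+1 * N.+1).+1) af n) *
                          (\sum_(1 <= m < (N.+1 * N.+1).+1) bg m))%R _.
    rewrite big_distrl; apply: ler_sum => n _; rewrite big_distrr; apply: ler_sum => m _.
    by rewrite ler_piMl ?mulr_ge0 // lern1 cnt_le1.
  by apply: ler_pM => //; [apply: sumr_ge0 | apply: sumr_ge0 | apply: hPAle | apply: hPBle].
have [br hbr] : exists l, Un_cv (sum_f_R0 (fun k => Cre (Dterm (uconv (twist F y) (twist G (- y))) (x, 0) k))) l.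
  apply: (abs_cv (M := fun k => Mu k.+1) (C := (A * B)%R)).
    move=> k.
    have -> : Cre (Dterm (uconv (twist F y) (twist G (- y))) (x, 0) k) =
       complex.Re (toC (Dterm (uconv (twist F y) (twist G (- y))) (x, 0) k)) by [].
    rewrite DU Re_sum normRE; apply/RleP.
    apply: le_trans (ler_norm_sum _ _ _) _; apply: ler_sum => a _; exact: hbRe.
  move=> N; rewrite (sumR_shift Mu); apply/RleP; exact: hSU.
have [bi hbi] : exists l, Un_cv (sum_f_R0 (fun k => Cim (Dterm (uconv (twist F y) (twist G (- y))) (x, 0) k))) l.
  apply: (abs_cv (M := fun k => Mu k.+1) (C := (A * B)%R)).
    move=> k.
    have -> : Cim (Dterm (uconv (twist F y) (twist G (- y))) (x, 0) k) =
       complex.Im (toC (Dterm (uconv (twist F y) (twist G (- y))) (x, 0) k)) by [].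
    rewrite DU Im_sum normRE; apply/RleP.
    apply: le_trans (ler_norm_sum _ _ _) _; apply: ler_sum => a _; exact: hbIm.
  move=> N; rewrite (sumR_shift Mu); apply/RleP; exact: hSU.
exists (ar, ai), (br, bi).
split; first by split.
split; first by split.
move=> l1 l2 [h1r h1i] [h2r h2i].
pose SF N := (\sum_(1 <= n < N.+1) fC F x y n)%R.
pose SG N := (\sum_(1 <= n < N.+1) gC G x y n)%R.
pose SH N := (\sum_(1 <= d < N.+1) fC F x y d * gC G x y d)%R.
pose SU N := (\sum_(1 <= k < N.+1) \sum_(1 <= a < k.+1 | cond k a)
                 fC F x y a * gC G x y (k %/ a)%N)%R.
have cF : ccv SF (toC l1).
  split; apply: cv_shift_back.
    apply: (Un_cv_ext _ h1r) => N.
    by rewrite (sumR_shift (fun n => complex.Re (fC F x y n))) Re_sum.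
  apply: (Un_cv_ext _ h1i) => N.
  by rewrite (sumR_shift (fun n => complex.Im (fC F x y n))) Im_sum.
have cG : ccv SG (toC l2).
  split; apply: cv_shift_back.
    apply: (Un_cv_ext _ h2r) => N.
    by rewrite (sumR_shift (fun n => complex.Re (gC G x y n))) Re_sum.
  apply: (Un_cv_ext _ h2i) => N.
  by rewrite (sumR_shift (fun n => complex.Im (gC G x y n))) Im_sum.
have cH : ccv SH (toC (ar, ai)).
  split; apply: cv_shift_back.
    apply: (Un_cv_ext _ har) => N.
    rewrite (PartSum.sum_eq _ (fun k => complex.Re (fC F x y k.+1 * gC G x y k.+1)%R)); last first.
      by move=> i _; rewrite -(DH _ _ _ y).
    by rewrite (sumR_shift (fun n => complex.Re (fC F x y n * gC G x y n)%R)) Re_sum.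
  apply: (Un_cv_ext _ hai) => N.
  rewrite (PartSum.sum_eq _ (fun k => complex.Im (fC F x y k.+1 * gC G x y k.+1)%R)); last first.
    by move=> i _; rewrite -(DH _ _ _ y).
  by rewrite (sumR_shift (fun n => complex.Im (fC F x y n * gC G x y n)%R)) Im_sum.
have cU : ccv SU (toC (br, bi)).
  split; apply: cv_shift_back.
    apply: (Un_cv_ext _ hbr) => N.
    rewrite (PartSum.sum_eq _ (fun k => complex.Re (\sum_(1 <= a < k.+2 | cond k.+1 a)
                 fC F x y a * gC G x y (k.+1 %/ a)%N))%R); last first.
      by move=> i _; rewrite -DU.
    by rewrite (sumR_shift (fun m => complex.Re (\sum_(1 <= a < m.+1 | cond m a)
                 fC F x y a * gC G x y (m %/ a)%N))%R) [in RHS]Re_sum.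
  apply: (Un_cv_ext _ hbi) => N.
  rewrite (PartSum.sum_eq _ (fun k => complex.Im (\sum_(1 <= a < k.+2 | cond k.+1 a)
               fC F x y a * gC G x y (k.+1 %/ a)%N))%R); last first.
    by move=> i _; rewrite -DU.
  by rewrite (sumR_shift (fun m => complex.Im (\sum_(1 <= a < m.+1 | cond m a)
               fC F x y a * gC G x y (m %/ a)%N))%R) [in RHS]Im_sum.
suff e : toC (Cmul l1 l2) = toC (Cmul (ar, ai) (br, bi)).
  by move: e; case: (Cmul l1 l2) => ? ?; case: (Cmul _ _) => ? ? [-> ->].
rewrite !toC_mul.
apply: (final_eq (P := fun K => (SF K * SG K)%R) (Q := fun N => (SH N * SU N)%R)
          (e := fun K => A * B - PA K * PB K) (ccv_mul cF cG) (ccv_mul cH cU)).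
  have hc : Un_cv (fun _ : nat => A * B) (A * B).
    by move=> eps he; exists 0%N => n _; rewrite /Rdist Rminus_diag_eq // Rabs_R0.
  have := CV_minus _ _ _ _ hc (CV_mult _ _ _ _ hPAcv hPBcv).
  by rewrite Rminus_diag_eq.
move=> K N hKN /=.
have hfin : (PA (N * N)%N * PB (N * N)%N - PA K * PB K <= A * B - PA K * PB K)%R.
  rewrite lerD2r; apply: ler_pM => //; try apply: sumr_ge0 => //.
split.
  apply: le_trans (err_bound (pi := @complex.Re R) Re_add Re_natM (fC_mul _ _ HF) (gC_mul _ _ HG)
                     (hbRe F G x y) hKN) hfin.
apply: le_trans (err_bound (pi := @complex.Im R) Im_add Im_natM (fC_mul _ _ HF) (gC_mul _ _ HG)
                   (hbIm F G x y) hKN) hfin.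
Qed.
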